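(* Let $\alpha_2\in\mathbb{C}$ and let $(q_1,p_1,q_2,p_2)$ be a solution of the Hamiltonian system $$\frac{dq_1}{dt}=q_1^2+p_2,\quad \frac{dp_1}{dt}=-2q_1p_1+\alpha_2-\frac12,\quad \frac{dq_2}{dt}=-3p_2^2+p_1+\frac t2,\quad \frac{dp_2}{dt}=q_2$$ (Hamiltonian $H=q_1^2p_1+(\frac12-\alpha_2)q_1-p_2^3+\frac t2p_2-\frac{q_2^2}{2}+p_1p_2$). The birational symplectic transformation $$r_1:(Q_1,P_1,Q_2,P_2)=\left(\frac1{q_1},\,-\left(q_1p_1+\frac12-\alpha_2\right)q_1,\,q_2,\,p_2\right)$$ takes this system into the Hamiltonian system $$\frac{dQ_1}{dt}=-Q_1^2P_2-1,\quad \frac{dP_1}{dt}=2Q_1P_1P_2+\left(\frac12-\alpha_2\right)P_2,\quad \frac{dQ_2}{dt}=-3P_2^2+\frac t2-Q_1^2P_1-\left(\frac12-\alpha_2\right)Q_1,\quad \frac{dP_2}{dt}=Q_2,$$ with polynomial Hamiltonian $$\tilde H=-P_1-\frac{Q_2^2}{2}-P_2^3+\frac t2P_2-\left(Q_1P_1+\frac{1-2\alpha_2}{2}\right)Q_1P_2 .$$ *)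

(* Defs.v *)
From HB Require Import structures.
From mathcomp Require Import all_boot all_order all_algebra.
From mathcomp Require Import all_classical all_reals all_analysis.
From mathcomp Require Import complex.
Set Implicit Arguments. Unset Strict Implicit. Unset Printing Implicit Defensive.
Import Order.TTheory GRing.Theory Num.Theory.
Import numFieldNormedType.Exports.
Local Open Scope ring_scope.
Local Open Scope complex_scope.

(* The complex numbers: C := R[i] for a real type R; derivatives are complex
   derivatives (C viewed as a normed space over itself). *)
Definition hasderiv (R : realType) (f : R[i] -> R[i]) (t d : R[i]) : Prop :=
  @is_derive R[i] R[i]^o R[i]^o t (1 : R[i]^o) (f : R[i]^o -> R[i]^o) (d : R[i]^o).

Definition Htilde (R : realType) (alpha2 t Q1 P1 Q2 P2 : R[i]) : R[i] :=
  - P1 - Q2 ^+ 2 / 2 - P2 ^+ 3 + t / 2 * P2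
  - (Q1 * P1 + (1 - 2 * alpha2) / 2) * Q1 * P2.

(* Main.v *)
Require Import Defs.
From HB Require Import structures.
From mathcomp Require Import all_boot all_order all_algebra.
From mathcomp Require Import all_classical all_reals all_analysis.
From mathcomp Require Import complex.
From mathcomp Require Import ring.
Import Order.TTheory GRing.Theory Num.Theory.
Import numFieldNormedType.Exports.
Local Open Scope ring_scope.
Local Open Scope classical_set_scope.

Set Implicit Arguments.
Section H.
Variable R : realType.
Implicit Types (f g : R[i] -> R[i]) (t a b : R[i]).

Lemma hd_eq f t a b : hasderiv f t a -> a = b -> hasderiv f t b.
Proof. by move=> ? <-. Qed.
Lemma hd_cst t (c : R[i]) : hasderiv (fun _ => c) t 0.
Proof. exact: is_derive_cst. Qed.
Lemma hd_id t : hasderiv (fun x => x) t 1.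
Proof. exact: is_derive_id. Qed.
Lemma hd_add f g t a b : hasderiv f t a -> hasderiv g t b ->
  hasderiv (fun x => f x + g x) t (a + b).
Proof. move=> ha hb; exact: (is_deriveD ha hb). Qed.
Lemma hd_neg f t a : hasderiv f t a -> hasderiv (fun x => - f x) t (- a).
Proof. move=> ha; exact: (is_deriveN ha). Qed.
Lemma hd_mul f g t a b : hasderiv f t a -> hasderiv g t b ->
  hasderiv (fun x => f x * g x) t (f t * b + g t * a).
Proof. move=> ha hb; exact: (is_deriveM ha hb). Qed.
Lemma hd_X f t a n : hasderiv f t a ->
  hasderiv (fun x => f x ^+ n) t (n%:R * f t ^+ n.-1 * a).
Proof.
move=> ha; elim: n => [|n IH].
  have -> : (fun x => f x ^+ 0) = fun _ => 1 by apply/funext=> x; rewrite expr0.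
  apply: hd_eq (hd_cst _ _) _. by rewrite !mul0r.
have -> : (fun x => f x ^+ n.+1) = fun x => f x * f x ^+ n
  by apply/funext=> x; rewrite exprS.
eapply hd_eq; first exact: (hd_mul ha IH).
case: n {IH} => [|n]; first by rewrite /=; ring.
rewrite /= exprS -[n.+2]addn1 -[n.+1]addn1 !natrD; ring.
Qed.
Lemma hd_inv f t a : f t != 0 -> hasderiv f t a ->
  hasderiv (fun x => (f x)^-1) t (- (f t) ^- 2 * a).
Proof.
move=> ft0; rewrite /hasderiv => ha.
have dv : derivable (f : R[i]^o -> R[i]^o) t 1 by case: ha.
apply: DeriveDef.
  exact: (derivableV ft0 dv).
rewrite (deriveV ft0 dv); case: ha => _ ->; by [].
Qed.
End H.

Lemma two_neq0 (R : realType) : (2 : R[i]) != 0.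
Proof. by rewrite pnatr_eq0. Qed.

Ltac hd_step :=
  match goal with
  | |- hasderiv (fun x => ?c) _ _ => apply: hd_cst
  | |- hasderiv (fun x => x) _ _ => apply: hd_id
  | |- hasderiv (fun x => @?f x + @?g x) _ _ => apply: (hd_add (f:=f) (g:=g))
  | |- hasderiv (fun x => - @?f x) _ _ => apply: (hd_neg (f:=f))
  | |- hasderiv (fun x => @?f x * @?g x) _ _ => apply: (hd_mul (f:=f) (g:=g))
  | |- hasderiv (fun x => @?f x ^+ ?n) _ _ => apply: (@hd_X _ f _ _ n)
  | |- hasderiv (fun x => (@?f x)^-1) _ _ => apply: (hd_inv (f:=f))
  | |- hasderiv _ _ _ => eassumption
  end.

Theorem proposition7p1 (R : realType) (alpha2 : R[i]) (D : set R[i])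
  (q1 p1 q2 p2 : R[i] -> R[i]) :
  open (D : set R[i]^o) ->
  (forall t, D t ->
     hasderiv q1 t (q1 t ^+ 2 + p2 t) /\
     hasderiv p1 t (- (2 * q1 t * p1 t) + alpha2 - 2^-1) /\
     hasderiv q2 t (- (3 * p2 t ^+ 2) + p1 t + t / 2) /\
     hasderiv p2 t (q2 t)) ->
  let Q1 := fun t => (q1 t)^-1 in
  let P1 := fun t => - ((q1 t * p1 t + 2^-1 - alpha2) * q1 t) in
  let Q2 := q2 in
  let P2 := p2 in
  (* the transformed system is Hamiltonian with Hamiltonian Htilde:
     dQi/dt = dH~/dPi,  dPi/dt = - dH~/dQi *)
  (forall t a b c d : R[i],
     hasderiv (fun x => Htilde alpha2 t a x c d) b (- (a ^+ 2 * d) - 1) /\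
     hasderiv (fun x => Htilde alpha2 t x b c d) a
       (- (2 * a * b * d + (2^-1 - alpha2) * d)) /\
     hasderiv (fun x => Htilde alpha2 t a b c x) d
       (- (3 * d ^+ 2) + t / 2 - a ^+ 2 * b - (2^-1 - alpha2) * a) /\
     hasderiv (fun x => Htilde alpha2 t a b x d) c (- c)) /\
  forall t, D t -> q1 t != 0 ->
     hasderiv Q1 t (- (Q1 t ^+ 2 * P2 t) - 1) /\
     hasderiv P1 t (2 * Q1 t * P1 t * P2 t + (2^-1 - alpha2) * P2 t) /\
     hasderiv Q2 t (- (3 * P2 t ^+ 2) + t / 2 - Q1 t ^+ 2 * P1 t
                    - (2^-1 - alpha2) * Q1 t) /\
     hasderiv P2 t (Q2 t).
Proof.
move=> _ H Q1 P1 Q2 P2; split.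
  move=> t a b c d; rewrite /Htilde.
  split; [|split; [|split]];
  (eapply hd_eq; [repeat hd_step|]; rewrite /=; field; try done; exact: two_neq0).
move=> t Dt q0; have [h1 [h2 [h3 h4]]] := H t Dt.
rewrite /Q1 /P1 /Q2 /P2.
split; [|split; [|split]].
all: (eapply hd_eq; [repeat hd_step|]; try exact q0; rewrite /= ?exprVn;
   field; rewrite ?q0 ?two_neq0 //).
Qed.
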